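(* Let $M$ be a right $R$-module which is an internal direct sum $M=\bigoplus_{n\in\mathbb{N}}M_n$ of countably many nonzero submodules $M_n$, and let $S=\mathrm{End}(M_R)$, so that $M$ is a left $S$-module. Then ${}_SM$ is not an $\aleph_0$-injective left $S$-module.
   Context: A left $S$-module $N$ is $\aleph_0$-injective if for every countably generated left ideal $J$ of $S$ and every $S$-homomorphism $f:J\to N$ there is an $S$-homomorphism $\bar f:S\to N$ with $\bar f|_J=f$. *)

(* Defs.v *)
From HB Require Import structures.
From mathcomp Require Import all_boot all_order all_algebra.
Set Implicit Arguments. Unset Strict Implicit. Unset Printing Implicit Defensive.
Import GRing.Theory.
Local Open Scope ring_scope.

(* A right R-module is modelled as a left module over the converse ring R^c:
   for M : lmodType R^c, the right action m.r is  (r : R^c) *: m. *)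

Section Defs.
Variable R : nzRingType.
Variable M : lmodType R^c.

(* f is an endomorphism of the right R-module M, i.e. an element of
   S = End(M_R).  Elements of S are represented as functions M -> M. *)
Definition is_endo (f : M -> M) : Prop :=
  (forall x y : M, f (x + y) = f x + f y) /\
  (forall (r : R^c) (x : M), f (r *: x) = r *: f x).

Definition is_submodule (N : M -> Prop) : Prop :=
  N 0 /\ (forall x y, N x -> N y -> N (x + y)) /\
  (forall (r : R^c) x, N x -> N (r *: x)).

Definition internal_direct_sum (Mn : nat -> M -> Prop) : Prop :=
  (forall n, is_submodule (Mn n)) /\
  (forall m : M, exists (N : nat) (x : nat -> M),
       (forall i, Mn i (x i)) /\ m = \sum_(i < N) x i) /\
  (forall (N : nat) (x : nat -> M),
       (forall i, Mn i (x i)) -> \sum_(i < N) x i = 0 ->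
       forall i, (i < N)%N -> x i = 0).

Definition is_left_ideal (J : (M -> M) -> Prop) : Prop :=
  (forall j, J j -> is_endo j) /\
  J (fun _ => 0) /\
  (forall j1 j2, J j1 -> J j2 -> J (fun m => j1 m + j2 m)) /\
  (forall s j, is_endo s -> J j -> J (fun m => s (j m))).

Definition countably_generated_left_ideal (J : (M -> M) -> Prop) : Prop :=
  is_left_ideal J /\
  exists g : nat -> (M -> M),
    (forall i, is_endo (g i)) /\
    forall j, J j <-> exists (N : nat) (s : nat -> (M -> M)),
       (forall i, is_endo (s i)) /\
       forall m, j m = \sum_(i < N) s i (g i m).

(* f : J -> M is a homomorphism of left S-modules, where S acts on M by
   evaluation (s . m = s m) and on J by composition. *)
Definition S_hom_on (J : (M -> M) -> Prop) (f : (M -> M) -> M) : Prop :=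
  (forall j1 j2, J j1 -> J j2 -> f (fun m => j1 m + j2 m) = f j1 + f j2) /\
  (forall s j, is_endo s -> J j -> f (fun m => s (j m)) = s (f j)).

Definition aleph0_injective_over_End : Prop :=
  forall (J : (M -> M) -> Prop) (f : (M -> M) -> M),
    countably_generated_left_ideal J -> S_hom_on J f ->
    exists fbar : (M -> M) -> M,
      S_hom_on is_endo fbar /\ (forall j, J j -> fbar j = f j).

End Defs.

(* Main.v *)
Require Import Defs.
From HB Require Import structures.
From mathcomp Require Import all_boot all_order all_algebra.
From Stdlib Require Import Classical ClassicalEpsilon.
Import GRing.Theory.
Local Open Scope ring_scope.

Section Aux.
Variable R : nzRingType.
Variable M : lmodType R^c.
Variable Mn : nat -> M -> Prop.
Hypothesis hsum : internal_direct_sum Mn.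

Lemma Mn0 i : Mn i 0.
Proof. by case: hsum => /(_ i) [] . Qed.
Lemma MnD i x y : Mn i x -> Mn i y -> Mn i (x + y).
Proof. by case: hsum => /(_ i) [_ []] H _ _; apply: H. Qed.
Lemma MnZ i (r : R^c) x : Mn i x -> Mn i (r *: x).
Proof. by case: hsum => /(_ i) [_ []] _ H _; apply: H. Qed.
Lemma MnN i x : Mn i x -> Mn i (- x).
Proof. by move=> H; rewrite -scaleN1r; apply: MnZ. Qed.

Lemma sum_widen {x : nat -> M} {N L} : (forall i, (N <= i)%N -> x i = 0) ->
  (N <= L)%N -> \sum_(i < L) x i = \sum_(i < N) x i.
Proof.
move=> hx hNL; rewrite (big_ord_widen _ _ hNL) [RHS]big_mkcond /=.
apply: eq_bigr => i _; case: ifP => // /negbT; rewrite -leqNgt => h.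
by rewrite hx.
Qed.

Definition rep (m : M) (N : nat) (x : nat -> M) :=
  (forall i, Mn i (x i)) /\ (forall i, (N <= i)%N -> x i = 0) /\
  m = \sum_(i < N) x i.

Lemma rep_ex m : exists p : nat * (nat -> M), rep m p.1 p.2.
Proof.
case: hsum => _ [/(_ m) [N [x [hx ->]]] _].
exists (N, fun i => if (i < N)%N then x i else 0); split; [|split] => /=.
- by move=> i; case: ifP => _; [apply: hx | apply: Mn0].
- by move=> i h; rewrite ltnNge h.
- by apply: eq_bigr => i _; rewrite ltn_ord.
Qed.

Lemma rep_uniq {m N x K y} : rep m N x -> rep m K y -> forall i, x i = y i.
Proof.
move=> [hx [zx ex]] [hy [zy ey]] i.
set L := maxn N K.
have hz : forall i, Mn i (x i - y i) by move=> k; apply: MnD; [|apply: MnN].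
have hs : \sum_(k < L) (x k - y k) = 0.
  rewrite sumrB (sum_widen zx (leq_maxl _ _)) (sum_widen zy (leq_maxr _ _)).
  by rewrite -ex -ey subrr.
case: (ltnP i L) => hi.
- case: hsum => _ [_ /(_ L _ hz hs i hi)] /eqP; by rewrite subr_eq0 => /eqP.
- rewrite zx ?zy //; [exact: leq_trans (leq_maxr _ _) hi | exact: leq_trans (leq_maxl _ _) hi].
Qed.

Definition repc (m : M) : nat * (nat -> M) :=
  proj1_sig (constructive_indefinite_description _ (rep_ex m)).
Definition e (n : nat) (m : M) : M := (repc m).2 n.

Lemma repc_spec m : rep m (repc m).1 (repc m).2.
Proof. exact: (proj2_sig (constructive_indefinite_description _ (rep_ex m))). Qed.

Lemma e_spec {m N x} n : rep m N x -> e n m = x n.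
Proof. move=> h; exact: (rep_uniq (repc_spec m) h n). Qed.

Lemma e_endo n : is_endo (e n).
Proof.
split.
- move=> a b.
  case: (repc_spec a) => ha [za ea]; case: (repc_spec b) => hb [zb eb].
  rewrite /e; apply: (e_spec (N := maxn (repc a).1 (repc b).1)
     (x := fun i => (repc a).2 i + (repc b).2 i)); split; [|split].
  + by move=> i; apply: MnD.
  + move=> i h; rewrite za ?zb ?addr0 //;
    [exact: leq_trans (leq_maxr _ _) h | exact: leq_trans (leq_maxl _ _) h].
  + rewrite big_split /= (sum_widen za (leq_maxl _ _)) (sum_widen zb (leq_maxr _ _)).
    by rewrite -ea -eb.
- move=> r a; case: (repc_spec a) => ha [za ea].
  rewrite /e; apply: (e_spec (N := (repc a).1) (x := fun i => r *: (repc a).2 i)).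
  split; [|split].
  + by move=> i; apply: MnZ.
  + by move=> i h; rewrite za // scaler0.
  + by rewrite {1}ea scaler_sumr.
Qed.

Lemma e_in n m : Mn n m -> e n m = m /\ forall k, k != n -> e k m = 0.
Proof.
move=> hm.
have hr : rep m n.+1 (fun k => if k == n then m else 0).
  split; [|split].
  - by move=> k; case: eqP => [->|_] //; apply: Mn0.
  - by move=> k h; case: eqP => // ek; move: h; rewrite ek ltnn.
  - rewrite big_ord_recr /= eqxx big1 ?add0r // => k _.
    by rewrite (ltn_eqF (ltn_ord k)).
split; first by rewrite (e_spec n hr) eqxx.
by move=> k /negbTE hk; rewrite (e_spec k hr) hk.
Qed.

Lemma endo0 (s : M -> M) : is_endo s -> s 0 = 0.
Proof.
case=> hs _; have := hs 0 0; rewrite addr0 => /eqP.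
by rewrite -subr_eq subrr eq_sym => /eqP.
Qed.

Lemma endo_sum (s : M -> M) N (F : nat -> M) : is_endo s ->
  s (\sum_(i < N) F i) = \sum_(i < N) s (F i).
Proof.
move=> hs; elim: N => [|N IH]; first by rewrite !big_ord0 endo0.
by rewrite !big_ord_recr /= (proj1 hs) IH.
Qed.

Lemma endo_id : is_endo (fun m : M => m).
Proof. by split. Qed.
Lemma endo_zero : is_endo (fun _ : M => 0).
Proof. by split => *; rewrite ?addr0 ?scaler0. Qed.
Lemma endo_add (s t : M -> M) : is_endo s -> is_endo t ->
  is_endo (fun m => s m + t m).
Proof.
move=> [s1 s2] [t1 t2]; split => *; first by rewrite s1 t1 addrACA.
by rewrite s2 t2 scalerDr.
Qed.
Lemma endo_comp (s t : M -> M) : is_endo s -> is_endo t ->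
  is_endo (fun m => s (t m)).
Proof. by move=> [s1 s2] [t1 t2]; split => *; rewrite ?t1 ?s1 ?t2 ?s2. Qed.

End Aux.

Theorem mainTheorem19 (R : nzRingType) (M : lmodType R^c)
  (Mn : nat -> M -> Prop)
  (hsum : internal_direct_sum Mn)
  (hnz : forall n, exists x : M, Mn n x /\ x <> 0) :
  ~ aleph0_injective_over_End M.
Proof.
move=> inj.
pose E n := @e _ _ _ hsum n.
have hE n : is_endo (E n) := @e_endo _ _ _ hsum n.
have [xn hxn] : exists xn : nat -> M, forall n, Mn n (xn n) /\ xn n <> 0.
  exists (fun n => proj1_sig (constructive_indefinite_description _ (hnz n))).
  by move=> n; case: constructive_indefinite_description.
have Exn k i : k != i -> E k (xn i) = 0.
  by move=> h; apply: (proj2 (@e_in _ _ _ hsum _ _ (proj1 (hxn i)))).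
have Exnn i : E i (xn i) = xn i by apply: (proj1 (@e_in _ _ _ hsum _ _ (proj1 (hxn i)))).
pose B (j : M -> M) N := forall i, (N <= i)%N -> j (xn i) = 0.
have Bmono j N L : B j N -> (N <= L)%N -> B j L.
  by move=> h hl i hi; apply: h; apply: leq_trans hi.
pose f (j : M -> M) : M :=
  match excluded_middle_informative (exists N, B j N) with
  | left H => \sum_(i < proj1_sig (constructive_indefinite_description _ H)) j (xn i)
  | right _ => 0 end.
have fval j N : B j N -> f j = \sum_(i < N) j (xn i).
  move=> hB; rewrite /f; case: excluded_middle_informative => [H|H]; last first.
    by exfalso; apply: H; exists N.
  case: constructive_indefinite_description => K hK /=.
  rewrite -(@sum_widen R M (fun i => j (xn i)) _ _ hK (leq_maxl K N)).
  by rewrite (@sum_widen R M (fun i => j (xn i)) _ _ hB (leq_maxr K N)).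
pose J (j : M -> M) := exists N (s : nat -> M -> M),
  (forall i, is_endo (s i)) /\ forall m, j m = \sum_(i < N) s i (E i m).
have JB j : J j -> exists N, B j N.
  move=> [N [s [hs hj]]]; exists N => i hi; rewrite hj big1 // => k _.
  rewrite Exn ?endo0 //; apply/negP => /eqP ek.
  by move: (ltn_ord k); rewrite ek ltnNge hi.
have Jendo j : J j -> is_endo j.
  move=> [N [s [hs hj]]]; split.
  - move=> a b; rewrite !hj -big_split /=; apply: eq_bigr => i _.
    by rewrite (proj1 (hE i)) (proj1 (hs i)).
  - move=> r a; rewrite !hj scaler_sumr; apply: eq_bigr => i _.
    by rewrite (proj2 (hE i)) (proj2 (hs i)).
have pad (N : nat) (s : nat -> M -> M) : (forall i, is_endo (s i)) ->
   exists s' : nat -> M -> M, (forall i, is_endo (s' i)) /\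
     (forall i, (N <= i)%N -> forall m, s' i m = 0) /\
     (forall m, \sum_(i < N) s i (E i m) = \sum_(i < N) s' i (E i m)).
  move=> hs; exists (fun i => if (i < N)%N then s i else (fun _ => 0)).
  split; [|split].
  - by move=> i; case: ifP => _; [apply: hs | apply: endo_zero].
  - by move=> i h m; rewrite ltnNge h.
  - by move=> m; apply: eq_bigr => i _; rewrite ltn_ord.
have Jideal : is_left_ideal J.
  split; [exact: Jendo | split; [|split]].
  - exists 0%N, (fun _ m => m); split; first by move=> _; apply: endo_id.
    by move=> m; rewrite big_ord0.
  - move=> j1 j2 [N1 [s1 [hs1 hj1]]] [N2 [s2 [hs2 hj2]]].
    have [t1 [ht1 [zt1 et1]]] := pad N1 s1 hs1.
    have [t2 [ht2 [zt2 et2]]] := pad N2 s2 hs2.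
    exists (maxn N1 N2), (fun i m => t1 i m + t2 i m); split.
      by move=> i; apply: endo_add.
    move=> m; rewrite hj1 hj2 et1 et2 big_split /=.
    rewrite (@sum_widen R M (fun i => t1 i (E i m)) _ _ _ (leq_maxl N1 N2)); last first.
      by move=> i h; rewrite zt1.
    rewrite (@sum_widen R M (fun i => t2 i (E i m)) _ _ _ (leq_maxr N1 N2)) //.
    by move=> i h; rewrite zt2.
  - move=> s j hs [N [t [ht hj]]]; exists N, (fun i m => s (t i m)); split.
      by move=> i; apply: endo_comp.
    by move=> m /=; rewrite hj; apply: (@endo_sum R M s N (fun i => t i (E i m)) hs).
have hJ : countably_generated_left_ideal J.
  by split => //; exists E; split.
have hf : S_hom_on J f.
  split.
  - move=> j1 j2 /JB [N1 h1] /JB [N2 h2].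
    have b1 := Bmono _ _ _ h1 (leq_maxl N1 N2).
    have b2 := Bmono _ _ _ h2 (leq_maxr N1 N2).
    rewrite (fval _ _ b1) (fval _ _ b2) (fval (fun m => j1 m + j2 m) (maxn N1 N2)).
      by rewrite big_split.
    by move=> i hi; rewrite b1 ?b2 ?addr0.
  - move=> s j hs /JB [N h].
    rewrite (fval _ _ h) (fval (fun m => s (j m)) N).
      by symmetry; apply: (@endo_sum R M s N (fun i => j (xn i)) hs).
    by move=> i hi /=; rewrite h // (@endo0 R M s hs).
have [fbar [[_ hlin] hag]] := inj J f hJ hf.
set m := fbar (fun x => x).
have key n : E n m = xn n.
  have H1 : fbar (E n) = E n m := hlin (E n) (fun x => x) (hE n) (@endo_id R M).
  have HJ : J (E n).
    exists n.+1, (fun i => if i == n then (fun x => x) else (fun _ => 0)); split.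
      by move=> i; case: ifP => _; [apply: endo_id | apply: endo_zero].
    move=> x; rewrite big_ord_recr /= eqxx big1 ?add0r // => k _.
    by rewrite (ltn_eqF (ltn_ord k)).
  rewrite -H1 hag // (fval _ n.+1).
    rewrite big_ord_recr /= Exnn big1 ?add0r // => k _.
    by rewrite Exn // eq_sym (ltn_eqF (ltn_ord k)).
  by move=> i hi; rewrite Exn //; apply/negP => /eqP ei; move: hi; rewrite ei ltnn.
have [_ [z _]] := @repc_spec _ _ _ hsum m.
apply: (proj2 (hxn (@repc _ _ _ hsum m).1)).
by rewrite -key /E /e z.
Qed.
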